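(* Let $n\ge2$, $s\ge n$ integers, $\Omega>0$, $0<\sigma<m_{\min}$, and let $\mu=\sum_{j=1}^n a_j\delta_{y_j}$ with pairwise distinct $y_j\in\big[-\frac{(n-1)\pi}{2\Omega},\frac{(n-1)\pi}{2\Omega}\big]$ and $\min_j|a_j|=m_{\min}$. For $t=1,\dots,2s+1$ let $z_t=-\Omega+\frac{t-1}{s}\Omega$ and $\mathbf Y(z_t)=\sum_{j=1}^n a_je^{iy_jz_t}+\mathbf W(z_t)$ with $|\mathbf W(z_t)|\le\sigma$. Let $\mathbf H(s)$ be the $(s+1)\times(s+1)$ Hankel matrix with entries $\mathbf H(s)_{p,q}=\mathbf Y(z_{p+q-1})$, $1\le p,q\le s+1$, and let $\hat\sigma_1\ge\dots\ge\hat\sigma_{s+1}$ be its singular values. Then $\hat\sigma_j\le(s+1)\sigma$ for $j=n+1,\dots,s+1$. Moreover, if $$\min_{p\ne j}|y_p-y_j|>\frac{\pi s}{\Omega}\Big(\frac{2n(s+1)}{\zeta(n)^2}\frac{\sigma}{m_{\min}}\Big)^{\frac{1}{2n-2}},$$ then $\hat\sigma_n>(s+1)\sigma$.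
   Context: For an integer $k\ge1$: $\zeta(k)=\big((\tfrac{k-1}{2})!\big)^2$ if $k$ is odd, $\zeta(k)=(\tfrac{k}{2})!(\tfrac{k-2}{2})!$ if $k$ is even. *)

(* Defs.v *)
From Stdlib Require Import Reals Arith.
Open Scope R_scope.

Definition cplx := (R * R)%type.
Definition C0 : cplx := (0, 0).
Definition C1 : cplx := (1, 0).
Definition RtoC (x : R) : cplx := (x, 0).
Definition Cadd (u v : cplx) : cplx := (fst u + fst v, snd u + snd v).
Definition Cmul (u v : cplx) : cplx :=
  (fst u * fst v - snd u * snd v, fst u * snd v + snd u * fst v).
Definition Cconj (u : cplx) : cplx := (fst u, - snd u).
Definition Cnorm (u : cplx) : R := sqrt (fst u ^ 2 + snd u ^ 2).
Definition Cexpi (x : R) : cplx := (cos x, sin x).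

Fixpoint Csum (N : nat) (f : nat -> cplx) : cplx :=
  match N with
  | O => C0
  | S k => Cadd (Csum k f) (f k)
  end.

Definition cmat := nat -> nat -> cplx.
Definition mmul (N : nat) (A B : cmat) : cmat :=
  fun i j => Csum N (fun k => Cmul (A i k) (B k j)).
Definition adj (A : cmat) : cmat := fun i j => Cconj (A j i).
Definition unitary (N : nat) (U : cmat) : Prop :=
  forall i j, (i < N)%nat -> (j < N)%nat ->
    mmul N (adj U) U i j = if Nat.eqb i j then C1 else C0.

(* A = U diag(sig) V^*, with U, V unitary and
   sig 0 >= sig 1 >= ... >= sig (N-1) >= 0 : a singular value
   decomposition; sig k is the (k+1)-th largest singular value of A. *)
Definition is_svd (N : nat) (A U : cmat) (sig : nat -> R) (V : cmat) : Prop :=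
  unitary N U /\ unitary N V /\
  (forall k, (k < N)%nat -> 0 <= sig k) /\
  (forall k, (S k < N)%nat -> sig (S k) <= sig k) /\
  (forall i j, (i < N)%nat -> (j < N)%nat ->
     A i j = Csum N (fun k => Cmul (Cmul (U i k) (RtoC (sig k))) (Cconj (V j k)))).

Definition zeta (k : nat) : R :=
  if Nat.odd k then (INR (fact ((k - 1) / 2))) ^ 2
  else INR (fact (k / 2)) * INR (fact ((k - 2) / 2)).

(* sampling points z_t, t = 1..2s+1 (1-based as in the paper) *)
Definition zpt (Omega : R) (s t : nat) : R :=
  - Omega + (INR t - 1) / INR s * Omega.

(* noiseless model: sum_{j=1}^n a_j e^{i y_j z}  (a, y are 0-based) *)
Definition model (n : nat) (a : nat -> cplx) (y : nat -> R) (z : R) : cplx :=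
  Csum n (fun j => Cmul (a j) (Cexpi (y j * z))).

(* Hankel matrix, 0-based entries: H p q = Y(z_{p+q+1}) (1-based t = p+q+1,
   matching H_{p,q} = Y(z_{p+q-1}) for 1-based p,q). *)
Definition hankel (Y : nat -> cplx) : cmat := fun p q => Y (p + q + 1)%nat.

(* Main.v *)
Require Import Defs.
From Stdlib Require Import Reals Arith Lra Lia List Psatz Classical.
Require Import Defs.
Open Scope R_scope.

Definition Copp (u : cplx) : cplx := (- fst u, - snd u).
Definition Csub (u v : cplx) : cplx := Cadd u (Copp v).

Lemma cplx_eq (u v : cplx) : fst u = fst v -> snd u = snd v -> u = v.
Proof. destruct u, v; simpl; intros; subst; reflexivity. Qed.

Ltac cpl := repeat match goal with u : cplx |- _ => destruct u end;
  unfold Cadd, Cmul, Copp, Csub, Cconj, C0, C1, RtoC, Cexpi in *; simpl;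
  try (apply cplx_eq; simpl; ring).

Lemma Cring_theory : ring_theory C0 C1 Cadd Cmul Csub Copp (@eq cplx).
Proof. constructor; intros; cpl. Qed.
Add Ring Cring : Cring_theory.

Lemma Cconj_add u v : Cconj (Cadd u v) = Cadd (Cconj u) (Cconj v).
Proof. cpl. Qed.
Lemma Cconj_mul u v : Cconj (Cmul u v) = Cmul (Cconj u) (Cconj v).
Proof. cpl. Qed.
Lemma Cconj_opp u : Cconj (Copp u) = Copp (Cconj u).
Proof. cpl. Qed.
Lemma Cconj_conj u : Cconj (Cconj u) = u.
Proof. destruct u; unfold Cconj; simpl; f_equal; ring. Qed.
Lemma Cconj_C0 : Cconj C0 = C0.
Proof. apply cplx_eq; simpl; ring. Qed.
Lemma Cconj_RtoC r : Cconj (RtoC r) = RtoC r.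
Proof. apply cplx_eq; simpl; ring. Qed.

Lemma Csum_ext N f g : (forall k, (k < N)%nat -> f k = g k) -> Csum N f = Csum N g.
Proof. induction N; intros H; simpl; auto. rewrite IHN by (intros; apply H; lia). rewrite H by lia. auto. Qed.
Lemma Csum_add N f g : Csum N (fun k => Cadd (f k) (g k)) = Cadd (Csum N f) (Csum N g).
Proof. induction N; simpl. cpl. rewrite IHN. ring. Qed.
Lemma Csum_mull N c f : Cmul c (Csum N f) = Csum N (fun k => Cmul c (f k)).
Proof. induction N; simpl. cpl. rewrite <- IHN. ring. Qed.
Lemma Csum_mulr N c f : Cmul (Csum N f) c = Csum N (fun k => Cmul (f k) c).
Proof. induction N; simpl. cpl. rewrite <- IHN. ring. Qed.
Lemma Csum_opp N f : Copp (Csum N f) = Csum N (fun k => Copp (f k)).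
Proof. induction N; simpl. cpl. rewrite <- IHN. ring. Qed.
Lemma Csum_conj N f : Cconj (Csum N f) = Csum N (fun k => Cconj (f k)).
Proof. induction N; simpl. apply Cconj_C0. rewrite Cconj_add, IHN. auto. Qed.
Lemma Csum_zero N f : (forall k, (k < N)%nat -> f k = C0) -> Csum N f = C0.
Proof. induction N; intros H; simpl; auto. rewrite IHN, H by (intros; try apply H; lia). ring. Qed.
Lemma Csum_swap N M f : Csum N (fun i => Csum M (fun j => f i j)) = Csum M (fun j => Csum N (fun i => f i j)).
Proof. induction N; simpl. symmetry; apply Csum_zero; auto. rewrite IHN, <- Csum_add. auto. Qed.
Lemma Csum_delta N k f : (k < N)%nat ->
  Csum N (fun l => Cmul (if Nat.eqb k l then C1 else C0) (f l)) = f k.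
Proof. induction N; intros H. lia. simpl. destruct (Nat.eq_dec k N).
  - subst. rewrite Nat.eqb_refl. rewrite Csum_zero. ring. intros l Hl.
    destruct (Nat.eqb_spec N l). lia. ring.
  - rewrite IHN by lia. destruct (Nat.eqb_spec k N). lia. ring. Qed.
Lemma Csum_delta' N k f : (k < N)%nat ->
  Csum N (fun l => Cmul (f l) (if Nat.eqb l k then C1 else C0)) = f k.
Proof. intros H. rewrite <- (Csum_delta N k f H). apply Csum_ext. intros l _.
  destruct (Nat.eqb_spec l k), (Nat.eqb_spec k l); try lia; ring. Qed.
Lemma Csum_split N M f : Csum (N + M) f = Cadd (Csum N f) (Csum M (fun k => f (N + k)%nat)).
Proof. induction M; simpl. rewrite Nat.add_0_r. ring. rewrite Nat.add_succ_r. simpl. rewrite IHM. ring. Qed.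

Fixpoint Rsum (N : nat) (f : nat -> R) : R :=
  match N with O => 0 | S k => Rsum k f + f k end.
Lemma Rsum_ext N f g : (forall k, (k < N)%nat -> f k = g k) -> Rsum N f = Rsum N g.
Proof. induction N; intros H; simpl; auto. rewrite IHN by (intros; apply H; lia). rewrite H by lia. auto. Qed.
Lemma Rsum_le N f g : (forall k, (k < N)%nat -> f k <= g k) -> Rsum N f <= Rsum N g.
Proof. induction N; intros H; simpl. lra. assert (Rsum N f <= Rsum N g) by (apply IHN; intros; apply H; lia). assert (f N <= g N) by (apply H; lia). lra. Qed.
Lemma Rsum_nonneg N f : (forall k, (k < N)%nat -> 0 <= f k) -> 0 <= Rsum N f.
Proof. intros H. replace 0 with (Rsum N (fun _ => 0)). apply Rsum_le; auto. induction N; simpl; auto. rewrite IHN by (intros; apply H; lia). ring. Qed.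
Lemma Rsum_add N f g : Rsum N (fun k => f k + g k) = Rsum N f + Rsum N g.
Proof. induction N; simpl. ring. rewrite IHN. ring. Qed.
Lemma Rsum_scal N c f : Rsum N (fun k => c * f k) = c * Rsum N f.
Proof. induction N; simpl. ring. rewrite IHN. ring. Qed.
Lemma Rsum_const N c : Rsum N (fun _ => c) = INR N * c.
Proof. induction N. simpl. ring. change (Rsum (S N) (fun _ => c)) with (Rsum N (fun _ => c) + c). rewrite IHN, S_INR. ring. Qed.
Lemma Rsum_term N f k : (forall i, (i < N)%nat -> 0 <= f i) -> (k < N)%nat -> f k <= Rsum N f.
Proof. induction N; intros H Hk. lia. simpl. destruct (Nat.eq_dec k N). subst.
  assert (0 <= Rsum N f) by (apply Rsum_nonneg; intros; apply H; lia). lra.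
  assert (f k <= Rsum N f) by (apply IHN; [intros; apply H; lia| lia]). assert (0 <= f N) by (apply H; lia). lra. Qed.
Lemma fst_Csum N f : fst (Csum N f) = Rsum N (fun k => fst (f k)).
Proof. induction N; simpl; auto. rewrite IHN. auto. Qed.
Lemma snd_Csum N f : snd (Csum N f) = Rsum N (fun k => snd (f k)).
Proof. induction N; simpl; auto. rewrite IHN. auto. Qed.

Lemma Rsum_CS N f g : (Rsum N (fun k => f k * g k))^2 <= Rsum N (fun k => f k ^ 2) * Rsum N (fun k => g k ^ 2).
Proof. induction N. simpl. lra.
  change (Rsum (S N) (fun k => f k * g k)) with (Rsum N (fun k => f k * g k) + f N * g N).
  change (Rsum (S N) (fun k => f k ^ 2)) with (Rsum N (fun k => f k ^ 2) + f N ^ 2).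
  change (Rsum (S N) (fun k => g k ^ 2)) with (Rsum N (fun k => g k ^ 2) + g N ^ 2).
  assert (0 <= Rsum N (fun k => f k ^2)) by (apply Rsum_nonneg; intros; nra).
  assert (0 <= Rsum N (fun k => g k ^2)) by (apply Rsum_nonneg; intros; nra).
  revert IHN H H0.
  generalize (Rsum N (fun k => f k ^2)) (Rsum N (fun k => g k ^2)) (Rsum N (fun k => f k * g k)) (f N) (g N).
  intros A B C a b IH HA HB.
  assert (E: (A * b^2 + B * a^2)^2 = (A*b^2 - B*a^2)^2 + 4*(A*B)*(a*b)^2) by ring.
  assert (0 <= (a*b)^2) by apply pow2_ge_0.
  assert (4*C^2*(a*b)^2 <= 4*(A*B)*(a*b)^2) by (apply Rmult_le_compat_r; lra).
  assert (0 <= (A*b^2 - B*a^2)^2) by apply pow2_ge_0.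
  assert (K1 : (2*C*(a*b))^2 <= (A * b^2 + B * a^2)^2) by nra.
  assert (K2 : 2 * C * (a*b) <= A * b^2 + B * a^2).
  { assert (0 <= A * b^2 + B * a^2) by nra. apply Rsqr_incr_0_var; unfold Rsqr; nra. }
  assert (E1: (C + a*b)^2 = C^2 + 2*C*(a*b) + (a*b)^2) by ring.
  assert (E2: (A + a^2)*(B + b^2) = A*B + (A*b^2 + B*a^2) + (a*b)^2) by ring.
  rewrite E1, E2. lra. Qed.

Definition Cn2 (z : cplx) : R := fst z * fst z + snd z * snd z.
Definition vn2 N (x : nat -> cplx) : R := Rsum N (fun k => Cn2 (x k)).
Definition cdot N (u v : nat -> cplx) : cplx := Csum N (fun k => Cmul (Cconj (u k)) (v k)).
Definition Mv N (M : cmat) (e : nat -> cplx) : nat -> cplx := fun p => Csum N (fun k => Cmul (M p k) (e k)).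

Lemma Cn2_nonneg z : 0 <= Cn2 z.
Proof. unfold Cn2; nra. Qed.
Lemma Cnorm_Cn2 z : Cnorm z = sqrt (Cn2 z).
Proof. unfold Cnorm, Cn2. f_equal. ring. Qed.
Lemma Cnorm_nonneg z : 0 <= Cnorm z.
Proof. unfold Cnorm. apply sqrt_pos. Qed.
Lemma Cn2_Cnorm z : Cn2 z = Cnorm z ^ 2.
Proof. rewrite Cnorm_Cn2. simpl. rewrite Rmult_1_r, sqrt_sqrt; auto using Cn2_nonneg. Qed.
Lemma Cn2_mul u v : Cn2 (Cmul u v) = Cn2 u * Cn2 v.
Proof. destruct u, v; unfold Cn2, Cmul; simpl; ring. Qed.
Lemma Cnorm_mul u v : Cnorm (Cmul u v) = Cnorm u * Cnorm v.
Proof. rewrite !Cnorm_Cn2, Cn2_mul. apply sqrt_mult; apply Cn2_nonneg. Qed.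
Lemma Cn2_conj u : Cn2 (Cconj u) = Cn2 u.
Proof. destruct u; unfold Cn2, Cconj; simpl; ring. Qed.
Lemma Cnorm_conj u : Cnorm (Cconj u) = Cnorm u.
Proof. rewrite !Cnorm_Cn2, Cn2_conj; auto. Qed.
Lemma Cn2_opp u : Cn2 (Copp u) = Cn2 u.
Proof. destruct u; unfold Cn2, Copp; simpl; ring. Qed.
Lemma Cconj_mul_self z : Cmul (Cconj z) z = RtoC (Cn2 z).
Proof. destruct z; unfold Cn2, Cmul, Cconj, RtoC; simpl; apply cplx_eq; simpl; ring. Qed.
Lemma Cn2_zero z : Cn2 z = 0 -> z = C0.
Proof. destruct z; unfold Cn2, C0; simpl; intros. apply cplx_eq; simpl; nra. Qed.
Lemma Cn2_pos z : z <> C0 -> 0 < Cn2 z.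
Proof. intros H. destruct (Cn2_nonneg z). auto. exfalso; apply H, Cn2_zero; auto. Qed.
Lemma Re_mul_le u v : fst (Cmul (Cconj u) v) <= Cnorm u * Cnorm v.
Proof. rewrite !Cnorm_Cn2, <- sqrt_mult by apply Cn2_nonneg. unfold Cn2.
  destruct u as [a b], v as [c d]; unfold Cmul, Cconj; simpl.
  apply Rsqr_incr_0_var. rewrite Rsqr_sqrt. unfold Rsqr.
  assert (0 <= (a*d - b*c)^2) by apply pow2_ge_0.
  assert ((a * c - - b * d) * (a * c - - b * d) + (a*d-b*c)^2 = (a * a + b * b) * (c * c + d * d)) by ring. lra.
  apply Rmult_le_pos; nra. apply sqrt_pos. Qed.
Lemma Cn2_add u v : Cn2 (Cadd u v) = Cn2 u + 2 * fst (Cmul (Cconj u) v) + Cn2 v.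
Proof. destruct u, v; unfold Cn2, Cadd, Cmul, Cconj; simpl; ring. Qed.
Lemma Cnorm_triangle u v : Cnorm (Cadd u v) <= Cnorm u + Cnorm v.
Proof. rewrite (Cnorm_Cn2 (Cadd u v)). apply Rsqr_incr_0_var.
  rewrite Rsqr_sqrt by apply Cn2_nonneg. rewrite Cn2_add, !Cn2_Cnorm. unfold Rsqr.
  pose proof (Re_mul_le u v). nra. pose proof (Cnorm_nonneg u); pose proof (Cnorm_nonneg v); lra. Qed.
Lemma Cnorm_C0 : Cnorm C0 = 0.
Proof. unfold Cnorm, C0; simpl fst; simpl snd. replace (0^2+0^2) with 0 by ring. apply sqrt_0. Qed.
Lemma Cnorm_Csum N f : Cnorm (Csum N f) <= Rsum N (fun k => Cnorm (f k)).
Proof. induction N; simpl. rewrite Cnorm_C0; lra. pose proof (Cnorm_triangle (Csum N f) (f N)). lra. Qed.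
Lemma Cnorm_RtoC r : 0 <= r -> Cnorm (RtoC r) = r.
Proof. intros. unfold Cnorm, RtoC; simpl fst; simpl snd. replace (r^2+0^2) with (r*r) by ring. apply sqrt_square; auto. Qed.
Lemma Cnorm_sub_sym u v : Cnorm (Csub u v) = Cnorm (Csub v u).
Proof. rewrite !Cnorm_Cn2. f_equal. destruct u, v; unfold Cn2, Csub, Cadd, Copp; simpl; ring. Qed.

Lemma Cexpi_add a b : Cexpi (a + b) = Cmul (Cexpi a) (Cexpi b).
Proof. unfold Cexpi, Cmul; simpl. rewrite cos_plus, sin_plus. apply cplx_eq; simpl; ring. Qed.
Lemma Cexpi_conj a : Cconj (Cexpi a) = Cexpi (- a).
Proof. unfold Cexpi, Cconj; simpl. rewrite cos_neg, sin_neg. auto. Qed.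
Lemma Cn2_Cexpi a : Cn2 (Cexpi a) = 1.
Proof. unfold Cn2, Cexpi; simpl. rewrite <- (sin2_cos2 a). unfold Rsqr. ring. Qed.
Lemma Cnorm_Cexpi a : Cnorm (Cexpi a) = 1.
Proof. rewrite Cnorm_Cn2, Cn2_Cexpi. apply sqrt_1. Qed.

Lemma vn2_nonneg N x : 0 <= vn2 N x.
Proof. apply Rsum_nonneg; intros; apply Cn2_nonneg. Qed.
Lemma vn2_cdot N x : vn2 N x = fst (cdot N x x).
Proof. unfold vn2, cdot. rewrite fst_Csum. apply Rsum_ext; intros. rewrite Cconj_mul_self. auto. Qed.
Lemma vn2_ext N x x' : (forall k, (k < N)%nat -> x k = x' k) -> vn2 N x = vn2 N x'.
Proof. intros H; unfold vn2; apply Rsum_ext; intros; rewrite H; auto. Qed.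

Lemma Rsum_CS_sqrt N f g : Rsum N (fun k => f k * g k) <= sqrt (Rsum N (fun k => f k ^ 2)) * sqrt (Rsum N (fun k => g k ^ 2)).
Proof. rewrite <- sqrt_mult by (apply Rsum_nonneg; intros; apply pow2_ge_0).
  destruct (Rle_dec (Rsum N (fun k => f k * g k)) 0). pose proof (sqrt_pos (Rsum N (fun k : nat => f k ^ 2) * Rsum N (fun k : nat => g k ^ 2))). lra.
  apply Rsqr_incr_0_var. rewrite Rsqr_sqrt. unfold Rsqr. pose proof (Rsum_CS N f g). simpl in *. lra.
  apply Rmult_le_pos; apply Rsum_nonneg; intros; apply pow2_ge_0. apply sqrt_pos. Qed.

Lemma vn2_add N u v : sqrt (vn2 N (fun k => Cadd (u k) (v k))) <= sqrt (vn2 N u) + sqrt (vn2 N v).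
Proof. apply Rsqr_incr_0_var. rewrite Rsqr_sqrt by apply vn2_nonneg. unfold vn2.
  rewrite (Rsum_ext N _ (fun k => Cn2 (u k) + 2 * fst (Cmul (Cconj (u k)) (v k)) + Cn2 (v k))) by (intros; apply Cn2_add).
  rewrite !Rsum_add, Rsum_scal.
  assert (Rsum N (fun k => fst (Cmul (Cconj (u k)) (v k))) <= Rsum N (fun k => Cnorm (u k) * Cnorm (v k))) by (apply Rsum_le; intros; apply Re_mul_le).
  pose proof (Rsum_CS_sqrt N (fun k => Cnorm (u k)) (fun k => Cnorm (v k))). cbv beta in H0.
  rewrite (Rsum_ext N (fun k => Cnorm (u k) ^2) (fun k => Cn2 (u k))) in H0 by (intros; rewrite Cn2_Cnorm; auto).
  rewrite (Rsum_ext N (fun k => Cnorm (v k) ^2) (fun k => Cn2 (v k))) in H0 by (intros; rewrite Cn2_Cnorm; auto).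
  unfold Rsqr. fold (vn2 N u) (vn2 N v) in *.
  pose proof (sqrt_sqrt (vn2 N u) (vn2_nonneg N u)). pose proof (sqrt_sqrt (vn2 N v) (vn2_nonneg N v)). nra.
  pose proof (sqrt_pos (vn2 N u)); pose proof (sqrt_pos (vn2 N v)); lra. Qed.

Lemma cdot_Mv N M e f : cdot N (Mv N M e) (Mv N M f) =
  Csum N (fun k => Cmul (Cconj (e k)) (Csum N (fun l => Cmul (mmul N (adj M) M k l) (f l)))).
Proof. unfold cdot, Mv, mmul, adj.
  transitivity (Csum N (fun p => Csum N (fun k => Csum N (fun l =>
     Cmul (Cmul (Cconj (e k)) (f l)) (Cmul (Cconj (M p k)) (M p l)))))).
  { apply Csum_ext; intros p _. rewrite Csum_conj, Csum_mulr. apply Csum_ext; intros k _.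
    rewrite Csum_mull. apply Csum_ext; intros l _. rewrite Cconj_mul. ring. }
  rewrite Csum_swap. apply Csum_ext; intros k _. rewrite Csum_mull.
  rewrite (Csum_swap N N (fun p l => Cmul (Cmul (Cconj (e k)) (f l)) (Cmul (Cconj (M p k)) (M p l)))).
  apply Csum_ext; intros l _.
  rewrite Csum_mulr, Csum_mull. apply Csum_ext; intros p _. ring. Qed.

Lemma cdot_unitary N M e f : unitary N M -> cdot N (Mv N M e) (Mv N M f) = cdot N e f.
Proof. intros HU. rewrite cdot_Mv. unfold cdot. apply Csum_ext; intros k Hk. f_equal.
  rewrite <- (Csum_delta N k f Hk). apply Csum_ext; intros l Hl. rewrite HU by auto. auto. Qed.

Lemma vn2_unitary N M e : unitary N M -> vn2 N (Mv N M e) = vn2 N e.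
Proof. intros. rewrite !vn2_cdot, cdot_unitary; auto. Qed.

Definition lsum (l : list nat) (f : nat -> cplx) : cplx := fold_right (fun k acc => Cadd (f k) acc) C0 l.
Lemma lsum_app l1 l2 f : lsum (l1 ++ l2) f = Cadd (lsum l1 f) (lsum l2 f).
Proof. induction l1; simpl. ring. rewrite IHl1. ring. Qed.
Lemma lsum_ext l f g : (forall k, In k l -> f k = g k) -> lsum l f = lsum l g.
Proof. induction l; simpl; intros H; auto. rewrite H, IHl; auto. Qed.
Lemma lsum_add l f g : lsum l (fun k => Cadd (f k) (g k)) = Cadd (lsum l f) (lsum l g).
Proof. induction l; simpl. ring. rewrite IHl. ring. Qed.
Lemma lsum_mull l c f : Cmul c (lsum l f) = lsum l (fun k => Cmul c (f k)).
Proof. induction l; simpl. ring. rewrite <- IHl. ring. Qed.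
Lemma lsum_zero l f : (forall k, In k l -> f k = C0) -> lsum l f = C0.
Proof. induction l; simpl; intros H; auto. rewrite H, IHl; auto. ring. Qed.
Lemma Csum_lsum N f : Csum N f = lsum (seq 0 N) f.
Proof. induction N. simpl; auto. rewrite seq_S, lsum_app, <- IHN. simpl. ring. Qed.

Definition Cinv (u : cplx) : cplx := (fst u / Cn2 u, - snd u / Cn2 u).
Lemma Cinv_r u : u <> C0 -> Cmul u (Cinv u) = C1.
Proof. intros H. pose proof (Cn2_pos u H). destruct u as [a b]. unfold Cinv, Cmul, C1, Cn2 in *; simpl in *.
  apply cplx_eq; simpl; field; lra. Qed.

Lemma kernel_list : forall m (A : nat -> nat -> cplx) (l : list nat), NoDup l -> (m < length l)%nat ->
  exists c : nat -> cplx, (exists k, In k l /\ c k <> C0) /\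
    forall i, (i < m)%nat -> lsum l (fun k => Cmul (A i k) (c k)) = C0.
Proof.
  induction m; intros A l Hnd Hlen.
  - destruct l as [|k l]; simpl in Hlen; [lia|]. exists (fun _ => C1). split.
    + exists k. split. left; auto. unfold C1, C0. intro H; inversion H; lra.
    + intros; lia.
  - destruct (classic (exists k, In k l /\ A m k <> C0)) as [[k0 [Hk0 Hnz]]|Hall].
    + destruct (in_split k0 l Hk0) as [l1 [l2 El]]. subst l.
      pose proof (NoDup_remove_1 _ _ _ Hnd) as Hnd'. pose proof (NoDup_remove_2 _ _ _ Hnd) as Hnin.
      set (A' := fun i k => Csub (A i k) (Cmul (A i k0) (Cmul (A m k) (Cinv (A m k0))))).
      destruct (IHm A' (l1 ++ l2) Hnd') as [c' [[k [Hk Hck]] Hc']].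
      { rewrite app_length in *; simpl in Hlen; lia. }
      set (c := fun k => if Nat.eqb k k0 then Cmul (Copp (lsum (l1 ++ l2) (fun k => Cmul (A m k) (c' k)))) (Cinv (A m k0)) else c' k).
      assert (Hcc : forall i, lsum (l1 ++ l2) (fun k => Cmul (A i k) (c k)) = lsum (l1 ++ l2) (fun k => Cmul (A i k) (c' k))).
      { intros i. apply lsum_ext. intros k1 Hk1. unfold c. destruct (Nat.eqb_spec k1 k0); auto. subst; contradiction. }
      assert (Hsplit : forall i, lsum (l1 ++ k0 :: l2) (fun k => Cmul (A i k) (c k)) = Cadd (Cmul (A i k0) (c k0)) (lsum (l1 ++ l2) (fun k => Cmul (A i k) (c' k)))).
      { intros i. rewrite <- Hcc, !lsum_app. simpl. ring. }
      exists c. split.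
      * exists k. split. apply in_app_or in Hk. apply in_or_app. simpl. tauto.
        unfold c. destruct (Nat.eqb_spec k k0); auto. subst; contradiction.
      * assert (Hc0 : c k0 = Cmul (Copp (lsum (l1 ++ l2) (fun k => Cmul (A m k) (c' k)))) (Cinv (A m k0))).
        { unfold c. rewrite Nat.eqb_refl. auto. }
        pose proof (Cinv_r _ Hnz) as Hinv.
        intros i Hi. rewrite Hsplit, Hc0.
        destruct (Nat.eq_dec i m).
        { subst i. transitivity (Cadd (Cmul (Copp (lsum (l1 ++ l2) (fun k => Cmul (A m k) (c' k)))) (Cmul (A m k0) (Cinv (A m k0)))) (lsum (l1 ++ l2) (fun k => Cmul (A m k) (c' k)))). ring. rewrite Hinv. ring. }
        assert (Hi' : (i < m)%nat) by lia. specialize (Hc' i Hi'). unfold A' in Hc'.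
        rewrite (lsum_ext _ _ (fun k => Cadd (Cmul (A i k) (c' k)) (Cmul (Copp (Cmul (A i k0) (Cinv (A m k0)))) (Cmul (A m k) (c' k))))) in Hc' by (intros; ring).
        rewrite lsum_add, <- lsum_mull in Hc'.
        transitivity (Cadd (lsum (l1 ++ l2) (fun k => Cmul (A i k) (c' k))) (Cmul (Copp (Cmul (A i k0) (Cinv (A m k0)))) (lsum (l1 ++ l2) (fun k => Cmul (A m k) (c' k))))). ring. exact Hc'.
    + destruct (IHm A l Hnd) as [c [Hnz Hc]]. lia. exists c. split; auto.
      intros i Hi. destruct (Nat.eq_dec i m). subst i. apply lsum_zero. intros k Hk.
      destruct (classic (A m k = C0)) as [E|E]. rewrite E. ring. exfalso; apply Hall; eauto.
      apply Hc; lia.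
Qed.

Lemma kernel_range m N (A : nat -> nat -> cplx) : (m < N)%nat ->
  exists c : nat -> cplx, (exists k, (k < N)%nat /\ c k <> C0) /\ (forall k, (N <= k)%nat -> c k = C0) /\
    forall i, (i < m)%nat -> Csum N (fun k => Cmul (A i k) (c k)) = C0.
Proof. intros H. destruct (kernel_list m A (seq 0 N) (seq_NoDup N 0)) as [c [[k [Hk Hck]] Hc]].
  rewrite seq_length; auto.
  exists (fun k => if Nat.ltb k N then c k else C0). apply in_seq in Hk. split; [|split].
  - exists k. split. lia. destruct (Nat.ltb_spec k N); auto; lia.
  - intros k1 Hk1. destruct (Nat.ltb_spec k1 N); auto; lia.
  - intros i Hi. rewrite <- (Hc i Hi), Csum_lsum. apply lsum_ext. intros k1 Hk1. apply in_seq in Hk1.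
    destruct (Nat.ltb_spec k1 N); auto; lia. Qed.

Definition ee (y h : R) (p : nat) : cplx := Cexpi (y * h * INR p).

Lemma zpt_eq Omega s p q : (s <> 0)%nat ->
  zpt Omega s (p + q + 1) = - Omega + (INR p + INR q) * (Omega / INR s).
Proof. intros Hs. unfold zpt. rewrite !plus_INR. simpl (INR 1). field. apply not_0_INR; auto. Qed.

Lemma model_factor n a y Omega s N x p : (s <> 0)%nat ->
  Mv N (fun p q => model n a y (zpt Omega s (p + q + 1))) x p =
  Csum n (fun i => Cmul (Cmul (a i) (Cexpi (- (y i * Omega)))) (Cmul (ee (y i) (Omega / INR s) p)
        (Csum N (fun q => Cmul (ee (y i) (Omega / INR s) q) (x q))))).
Proof. intros Hs. unfold Mv, model.
  transitivity (Csum N (fun q => Csum n (fun i => Cmul (Cmul (Cmul (a i) (Cexpi (- (y i * Omega)))) (ee (y i) (Omega / INR s) p)) (Cmul (ee (y i) (Omega / INR s) q) (x q))))).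
  - apply Csum_ext; intros q _. rewrite Csum_mulr. apply Csum_ext; intros i _.
    rewrite zpt_eq by auto. unfold ee.
    replace (y i * (- Omega + (INR p + INR q) * (Omega / INR s))) with (- (y i * Omega) + (y i * (Omega / INR s) * INR p + y i * (Omega / INR s) * INR q)) by ring.
    rewrite !Cexpi_add. ring.
  - rewrite Csum_swap. apply Csum_ext; intros i _. rewrite !Csum_mull. apply Csum_ext; intros q _. ring. Qed.

Lemma hankel_split (f g : nat -> cplx) N x p :
  Mv N (hankel (fun t => Cadd (f t) (g t))) x p =
  Cadd (Mv N (fun p q => f (p + q + 1)%nat) x p) (Mv N (fun p q => g (p + q + 1)%nat) x p).
Proof. unfold Mv, hankel. rewrite <- Csum_add. apply Csum_ext; intros; ring. Qed.

Lemma svd_action N A U sig V x p : is_svd N A U sig V -> (p < N)%nat ->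
  Mv N A x p = Mv N U (fun k => Cmul (RtoC (sig k)) (Mv N (adj V) x k)) p.
Proof. intros [_ [_ [_ [_ HA]]]] Hp. unfold Mv, adj.
  transitivity (Csum N (fun q => Csum N (fun k => Cmul (Cmul (Cmul (U p k) (RtoC (sig k))) (Cconj (V q k))) (x q)))).
  - apply Csum_ext; intros q Hq. rewrite HA by auto. rewrite Csum_mulr. auto.
  - rewrite Csum_swap. apply Csum_ext; intros k _. rewrite !Csum_mull. apply Csum_ext; intros q _. ring. Qed.

Lemma vn2_scal_sig N U sig d : unitary N U ->
  vn2 N (Mv N U (fun k => Cmul (RtoC (sig k)) (d k))) = Rsum N (fun k => sig k ^ 2 * Cn2 (d k)).
Proof. intros HU. rewrite vn2_unitary by auto. unfold vn2. apply Rsum_ext; intros.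
  rewrite Cn2_mul. f_equal. unfold Cn2, RtoC; simpl. ring. Qed.

Lemma Rsum_abs_CS N f : (Rsum N f) ^ 2 <= INR N * Rsum N (fun k => f k ^ 2).
Proof. pose proof (Rsum_CS N (fun _ => 1) f). cbv beta in H.
  rewrite (Rsum_ext N (fun k => 1 * f k) f) in H by (intros; ring).
  rewrite (Rsum_ext N (fun _ => 1 ^ 2) (fun _ => 1)) in H by (intros; ring).
  rewrite Rsum_const in H. lra. Qed.

Lemma noise_bound N (E : cmat) sigma x : 0 <= sigma ->
  (forall p q, (p < N)%nat -> (q < N)%nat -> Cnorm (E p q) <= sigma) ->
  vn2 N (Mv N E x) <= (INR N * sigma) ^ 2 * vn2 N x.
Proof. intros Hs HE.
  assert (Hp : forall p, (p < N)%nat -> Cn2 (Mv N E x p) <= INR N * sigma ^ 2 * vn2 N x).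
  { intros p Hp. unfold Mv. rewrite Cn2_Cnorm.
    assert (H1 : Cnorm (Csum N (fun k => Cmul (E p k) (x k))) <= sigma * Rsum N (fun k => Cnorm (x k))).
    { eapply Rle_trans. apply Cnorm_Csum. rewrite <- Rsum_scal. apply Rsum_le. intros k Hk.
      rewrite Cnorm_mul. apply Rmult_le_compat_r. apply Cnorm_nonneg. auto. }
    pose proof (Rsum_abs_CS N (fun k => Cnorm (x k))). cbv beta in H.
    rewrite (Rsum_ext N (fun k => Cnorm (x k) ^ 2) (fun k => Cn2 (x k))) in H by (intros; rewrite Cn2_Cnorm; auto).
    fold (vn2 N x) in H.
    assert (0 <= Rsum N (fun k => Cnorm (x k))) by (apply Rsum_nonneg; intros; apply Cnorm_nonneg).
    pose proof (Cnorm_nonneg (Csum N (fun k : nat => Cmul (E p k) (x k)))).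
    assert (Cnorm (Csum N (fun k => Cmul (E p k) (x k))) ^ 2 <= (sigma * Rsum N (fun k => Cnorm (x k)))^2).
    { apply pow_incr; auto. }
    assert ((sigma * Rsum N (fun k => Cnorm (x k)))^2 = sigma^2 * (Rsum N (fun k => Cnorm (x k)))^2) by ring.
    assert (0 <= sigma ^2) by apply pow2_ge_0. nra. }
  unfold vn2 at 1. eapply Rle_trans. apply Rsum_le. exact Hp. rewrite Rsum_const. 
  replace ((INR N * sigma) ^ 2 * vn2 N x) with (INR N * (INR N * sigma ^ 2 * vn2 N x)) by ring. lra. Qed.

Lemma adjV_V N V c k : unitary N V -> (k < N)%nat -> Mv N (adj V) (Mv N V c) k = c k.
Proof. intros HV Hk. unfold Mv, adj.
  transitivity (Csum N (fun l => Cmul (mmul N (adj V) V k l) (c l))).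
  - unfold mmul, adj. transitivity (Csum N (fun q => Csum N (fun l => Cmul (Cmul (Cconj (V q k)) (V q l)) (c l)))).
    + apply Csum_ext; intros q _. rewrite Csum_mull. apply Csum_ext; intros; ring.
    + rewrite Csum_swap. apply Csum_ext; intros l _. rewrite Csum_mulr. auto.
  - rewrite <- (Csum_delta N k c Hk). apply Csum_ext; intros l Hl. rewrite HV; auto. Qed.

Lemma sig_mono N sig : (forall k, (S k < N)%nat -> sig (S k) <= sig k) ->
  forall k j, (k <= j)%nat -> (j < N)%nat -> sig j <= sig k.
Proof. intros H k j Hkj. induction Hkj; intros. lra. assert (sig (S m) <= sig m) by (apply H; lia).
  assert (sig m <= sig k) by (apply IHHkj; lia). lra. Qed.

Lemma Csum_trunc N M f : (M <= N)%nat -> (forall k, (M <= k)%nat -> f k = C0) -> Csum N f = Csum M f.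
Proof. intros H Hf. replace N with (M + (N - M))%nat by lia. rewrite Csum_split.
  rewrite (Csum_zero (N - M)). ring. intros; apply Hf; lia. Qed.

Lemma part1 (n s : nat) (Omega sigma : R) (a : nat -> cplx) (y : nat -> R) (W : nat -> cplx)
  (hs : (n <= s)%nat) (hs0 : (s <> 0)%nat) (hsigma : 0 <= sigma)
  (hW : forall t, (1 <= t <= 2 * s + 1)%nat -> Cnorm (W t) <= sigma)
  (U V : cmat) (sig : nat -> R) :
  is_svd (s + 1) (hankel (fun t => Cadd (model n a y (zpt Omega s t)) (W t))) U sig V ->
  forall j, (n <= j <= s)%nat -> sig j <= INR (s + 1) * sigma.
Proof.
  intros Hsvd j Hj. set (N := (s + 1)%nat). set (h := Omega / INR s).
  pose proof Hsvd as [HU [HV [Hpos [Hdec HA]]]].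
  destruct (kernel_range n (S j) (fun i k => Csum N (fun q => Cmul (ee (y i) h q) (V q k)))) as [c [[k0 [Hk0 Hck0]] [Hcz Hc]]]. lia.
  set (x := Mv N V c).
  assert (Hw : forall i, (i < n)%nat -> Csum N (fun q => Cmul (ee (y i) h q) (x q)) = C0).
  { intros i Hi. rewrite <- (Hc i Hi). rewrite <- (Csum_trunc N (S j)); [| unfold N; lia | intros k Hk; rewrite Hcz by lia; ring].
    unfold x, Mv. transitivity (Csum N (fun q => Csum N (fun k => Cmul (Cmul (ee (y i) h q) (V q k)) (c k)))).
    apply Csum_ext; intros q _. rewrite Csum_mull. apply Csum_ext; intros; ring.
    rewrite Csum_swap. apply Csum_ext; intros k _. rewrite Csum_mulr. auto. }
  assert (HHx : forall p, (p < N)%nat -> Mv N (hankel (fun t => Cadd (model n a y (zpt Omega s t)) (W t))) x p = Mv N (fun p q => W (p + q + 1)%nat) x p).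
  { intros p Hp. rewrite hankel_split. rewrite model_factor by auto. fold h. rewrite Csum_zero. ring.
    intros i Hi. rewrite Hw by auto. ring. }
  assert (E1 : vn2 N (Mv N (hankel (fun t => Cadd (model n a y (zpt Omega s t)) (W t))) x) <= (INR N * sigma) ^ 2 * vn2 N c).
  { rewrite (vn2_ext N _ _ HHx). replace (vn2 N c) with (vn2 N x) by (unfold x; apply vn2_unitary; auto). apply noise_bound; auto.
    intros p q Hp Hq. apply hW. unfold N in *; lia. }
  assert (HS : forall p, (p < N)%nat -> Mv N (hankel (fun t => Cadd (model n a y (zpt Omega s t)) (W t))) x p = Mv N U (fun k => Cmul (RtoC (sig k)) (Mv N (adj V) x k)) p).
  { intros p Hp. apply svd_action; auto. }
  rewrite (vn2_ext N _ _ HS) in E1.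
  rewrite vn2_scal_sig in E1 by auto.
  assert (E2 : sig j ^ 2 * vn2 N c <= Rsum N (fun k => sig k ^ 2 * Cn2 (Mv N (adj V) x k))).
  { unfold vn2. rewrite <- Rsum_scal. apply Rsum_le. intros k Hk. unfold x. rewrite adjV_V by auto.
    destruct (le_lt_dec k j).
    - apply Rmult_le_compat_r. apply Cn2_nonneg. assert (0 <= sig j) by (apply Hpos; unfold N; lia).
      assert (sig j <= sig k) by (apply (sig_mono N sig Hdec); unfold N in *; lia). apply pow_incr; lra.
    - rewrite Hcz by lia. unfold Cn2, C0; simpl. lra. }
  assert (Hc0 : 0 < vn2 N c).
  { unfold vn2. eapply Rlt_le_trans. apply (Cn2_pos _ Hck0). apply (Rsum_term N (fun k => Cn2 (c k)) k0). intros; apply Cn2_nonneg. unfold N; lia. }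
  assert (sig j ^ 2 <= (INR N * sigma) ^ 2).
  { apply (Rmult_le_reg_r (vn2 N c)); auto. lra. }
  assert (0 <= sig j) by (apply Hpos; unfold N; lia).
  assert (0 <= INR N * sigma) by (apply Rmult_le_pos; auto; apply pos_INR).
  apply Rsqr_incr_0_var; unfold Rsqr; auto. simpl in H. lra.
Qed.

Definition Cprod (l : list nat) (f : nat -> cplx) : cplx := fold_right (fun k acc => Cmul (f k) acc) C1 l.
Definition Rprodl (l : list nat) (f : nat -> R) : R := fold_right (fun k acc => f k * acc) 1 l.

Lemma Cprod_zero l f i : In i l -> f i = C0 -> Cprod l f = C0.
Proof. induction l; simpl; intros H Hf. contradiction. destruct H. subst. rewrite Hf. ring.
  rewrite IHl; auto. ring. Qed.
Lemma Cnorm_Cprod l f : Cnorm (Cprod l f) = Rprodl l (fun k => Cnorm (f k)).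
Proof. induction l; simpl. unfold Cnorm, C1; simpl fst; simpl snd. replace (1^2 + 0^2) with 1 by ring. apply sqrt_1.
  rewrite Cnorm_mul, IHl. auto. Qed.
Lemma Rprodl_nonneg l f : (forall k, 0 <= f k) -> 0 <= Rprodl l f.
Proof. intros H; induction l; simpl. lra. apply Rmult_le_pos; auto. Qed.

Fixpoint Fop (u : nat -> cplx) (l : list nat) (g : nat -> cplx) : nat -> cplx :=
  match l with
  | nil => g
  | k :: l' => fun p => Csub (Fop u l' g (S p)) (Cmul (u k) (Fop u l' g p))
  end.

Lemma ee_S y h p : ee y h (S p) = Cmul (ee y h p) (Cexpi (y * h)).
Proof. unfold ee. rewrite S_INR. rewrite <- Cexpi_add. f_equal. ring. Qed.
Lemma ee_0 y h : ee y h 0 = C1.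
Proof. unfold ee, Cexpi. simpl. rewrite Rmult_0_r, cos_0, sin_0. auto. Qed.

Lemma Fop_inv n y h c l : forall p,
  Fop (fun k => Cexpi (y k * h)) l (fun p => Csum n (fun i => Cmul (ee (y i) h p) (c i))) p =
  Csum n (fun i => Cmul (Cmul (ee (y i) h p) (c i)) (Cprod l (fun k => Csub (Cexpi (y i * h)) (Cexpi (y k * h))))).
Proof. induction l; intros p; simpl.
  - apply Csum_ext; intros; ring.
  - rewrite !IHl. unfold Csub at 1. rewrite Csum_mull, Csum_opp, <- Csum_add. apply Csum_ext; intros i _.
    rewrite ee_S. ring. Qed.

Lemma Cnorm_opp u : Cnorm (Copp u) = Cnorm u.
Proof. rewrite !Cnorm_Cn2, Cn2_opp. auto. Qed.

Lemma Fop_bound (u : nat -> cplx) (g : nat -> cplx) (G : R) (M : nat) :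
  (forall k, Cnorm (u k) = 1) -> (forall q, (q <= M)%nat -> Cnorm (g q) <= G) ->
  forall l p, (p + length l <= M)%nat -> Cnorm (Fop u l g p) <= 2 ^ (length l) * G.
Proof. intros Hu Hg. induction l; intros p Hp; simpl in *.
  - rewrite Rmult_1_l. apply Hg. lia.
  - unfold Csub. eapply Rle_trans. apply Cnorm_triangle. rewrite Cnorm_opp, Cnorm_mul, Hu.
    assert (Cnorm (Fop u l g (S p)) <= 2 ^ length l * G) by (apply IHl; lia).
    assert (Cnorm (Fop u l g p) <= 2 ^ length l * G) by (apply IHl; lia). lra. Qed.

Lemma Rsum_lt N f g : (forall k, (k < N)%nat -> f k <= g k) -> (exists k, (k < N)%nat /\ f k < g k) -> Rsum N f < Rsum N g.
Proof. induction N; intros H [k [Hk Hlt]]. lia. simpl. destruct (Nat.eq_dec k N).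
  - subst. assert (Rsum N f <= Rsum N g) by (apply Rsum_le; intros; apply H; lia). lra.
  - assert (Rsum N f < Rsum N g) by (apply IHN; [intros; apply H; lia| exists k; split; auto; lia]).
    assert (f N <= g N) by (apply H; lia). lra. Qed.

Definition others (n j : nat) : list nat := filter (fun k => negb (Nat.eqb k j)) (seq 0 n).

Lemma others_length n j : (j < n)%nat -> length (others n j) = (n - 1)%nat.
Proof. unfold others. intros H.
  assert (forall m, length (filter (fun k => negb (Nat.eqb k j)) (seq m (n - m))) = if Nat.leb m j then (n - m - 1)%nat else (n - m)%nat).
  { intros m. remember (n - m)%nat as r. revert m Heqr. induction r; intros m Hr.
    - simpl. destruct (Nat.leb_spec m j); lia.
    - simpl. pose proof (IHr (S m) ltac:(lia)) as IH. destruct (Nat.eqb_spec m j); simpl; rewrite ?IH.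
      + subst. destruct (Nat.leb_spec (S j) j); destruct (Nat.leb_spec j j); lia.
      + destruct (Nat.leb_spec (S m) j); destruct (Nat.leb_spec m j); lia. }
  specialize (H0 0%nat). rewrite Nat.sub_0_r in H0. rewrite H0. destruct (Nat.leb_spec 0 j); lia. Qed.

Lemma in_others n j k : In k (others n j) <-> (k < n)%nat /\ k <> j.
Proof. unfold others. rewrite filter_In, in_seq. destruct (Nat.eqb_spec k j); simpl; intuition lia. Qed.

Lemma vander (n N : nat) (y : nat -> R) (h Q : R) (c : nat -> cplx) :
  (n <= N)%nat -> (1 <= n)%nat -> 0 < Q ->
  (forall j, (j < n)%nat -> 2 ^ (n - 1) * Q < Rprodl (others n j) (fun k => Cnorm (Csub (Cexpi (y j * h)) (Cexpi (y k * h))))) ->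
  (exists j, (j < n)%nat /\ c j <> C0) ->
  Q ^ 2 * vn2 n c < INR n * vn2 N (fun p => Csum n (fun i => Cmul (ee (y i) h p) (c i))).
Proof.
  intros HnN Hn HQ Hprod Hc.
  set (g := fun p => Csum n (fun i => Cmul (ee (y i) h p) (c i))).
  assert (Hj : forall j, (j < n)%nat -> Cnorm (c j) * Q <= sqrt (vn2 N g) /\ (c j <> C0 -> Cnorm (c j) * Q < sqrt (vn2 N g))).
  { intros j Hjn.
    assert (E : Fop (fun k => Cexpi (y k * h)) (others n j) g 0 = Cmul (c j) (Cprod (others n j) (fun k => Csub (Cexpi (y j * h)) (Cexpi (y k * h))))).
    { unfold g. rewrite Fop_inv. rewrite Csum_lsum.
      replace (seq 0 n) with (seq 0 j ++ j :: seq (S j) (n - S j)).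
      2:{ set (r := (n - S j)%nat). assert (Hr : n = (j + S r)%nat) by (unfold r; lia). rewrite Hr, seq_app. simpl. reflexivity. }
      rewrite lsum_app. simpl. rewrite !lsum_zero. rewrite ee_0. ring.
      - intros k Hk. apply in_seq in Hk. rewrite (Cprod_zero _ _ k). ring. apply in_others; lia. unfold Csub. ring.
      - intros k Hk. apply in_seq in Hk. rewrite (Cprod_zero _ _ k). ring. apply in_others; lia. unfold Csub. ring. }
    assert (B : Cnorm (Fop (fun k => Cexpi (y k * h)) (others n j) g 0) <= 2 ^ (n - 1) * sqrt (vn2 N g)).
    { rewrite <- (others_length n j Hjn). apply (Fop_bound _ _ _ (n - 1)).
      - intros; apply Cnorm_Cexpi.
      - intros q Hq. rewrite Cnorm_Cn2. apply sqrt_le_1_alt. unfold vn2. apply (Rsum_term N (fun k => Cn2 (g k))).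
        intros; apply Cn2_nonneg. lia.
      - rewrite others_length; lia. }
    rewrite E, Cnorm_mul, Cnorm_Cprod in B. specialize (Hprod j Hjn).
    set (P := Rprodl (others n j) (fun k => Cnorm (Csub (Cexpi (y j * h)) (Cexpi (y k * h))))) in *.
    assert (H2 : 0 < 2 ^ (n - 1)) by (apply pow_lt; lra).
    pose proof (Cnorm_nonneg (c j)).
    assert (Cnorm (c j) * (2 ^ (n - 1) * Q) <= Cnorm (c j) * P) by (apply Rmult_le_compat_l; lra).
    split.
    - apply (Rmult_le_reg_l (2 ^ (n - 1))); auto. lra.
    - intros Hcj. assert (0 < Cnorm (c j)). { rewrite Cnorm_Cn2. apply sqrt_lt_R0. apply Cn2_pos; auto. }
      assert (Cnorm (c j) * (2 ^ (n - 1) * Q) < Cnorm (c j) * P) by (apply Rmult_lt_compat_l; lra).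
      apply (Rmult_lt_reg_l (2 ^ (n - 1))); auto. lra. }
  assert (Hsq : forall j, (j < n)%nat -> Q ^ 2 * Cn2 (c j) <= vn2 N g /\ (c j <> C0 -> Q ^ 2 * Cn2 (c j) < vn2 N g)).
  { intros j Hjn. destruct (Hj j Hjn) as [H1 H2].
    assert (E : Q ^ 2 * Cn2 (c j) = (Cnorm (c j) * Q) ^ 2) by (rewrite Cn2_Cnorm; ring).
    pose proof (sqrt_sqrt (vn2 N g) (vn2_nonneg N g)).
    assert (0 <= Cnorm (c j) * Q) by (apply Rmult_le_pos; [apply Cnorm_nonneg|lra]).
    rewrite E. split.
    - replace (vn2 N g) with (sqrt (vn2 N g) ^ 2) by (simpl; lra). apply pow_incr. lra.
    - intros Hc'. specialize (H2 Hc'). replace (vn2 N g) with (sqrt (vn2 N g) ^ 2) by (simpl; lra).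
      simpl. rewrite !Rmult_1_r. apply Rmult_le_0_lt_compat; lra. }
  unfold vn2 at 1. rewrite <- Rsum_scal, <- Rsum_const.
  destruct Hc as [j0 [Hj0 Hcj0]].
  apply Rsum_lt. intros k Hk; apply Hsq; auto. exists j0. split; auto. apply Hsq; auto.
Qed.

Lemma jordan x : 0 < x < PI / 2 -> 2 * x / PI < sin x.
Proof. intros [H0 H1]. pose proof PI_RGT_0.
  destruct (MVT_cor2 sin cos 0 x H0 (fun c _ => derivable_pt_lim_sin c)) as [c1 [E1 [Hc1 Hc1']]].
  destruct (MVT_cor2 sin cos x (PI/2) H1 (fun c _ => derivable_pt_lim_sin c)) as [c2 [E2 [Hc2 Hc2']]].
  rewrite sin_0 in E1. rewrite sin_PI2 in E2.
  assert (cos c2 < cos c1) by (apply cos_decreasing_1; lra).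
  (* sin x = cos c1 * x ; 1 - sin x = cos c2 * (PI/2 - x) *)
  assert (sin x * (PI / 2 - x) > x * (1 - sin x)).
  { rewrite E2. replace (sin x) with (cos c1 * x) at 1 by lra.
    assert (0 < x * (PI/2 - x)) by nra. nra. }
  apply (Rmult_lt_reg_r (PI / 2)). lra. field_simplify. nra. lra. Qed.

Lemma Cnorm_expi_diff a b : Cnorm (Csub (Cexpi a) (Cexpi b)) = 2 * Rabs (sin ((a - b) / 2)).
Proof. rewrite Cnorm_Cn2. unfold Cn2, Csub, Cadd, Copp, Cexpi; simpl.
  replace ((cos a + - cos b) * (cos a + - cos b) + (sin a + - sin b) * (sin a + - sin b))
    with (2 - 2 * (cos a * cos b + sin a * sin b)).
  2:{ pose proof (sin2_cos2 a); pose proof (sin2_cos2 b). unfold Rsqr in *. nra. }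
  rewrite <- cos_minus. replace (a - b) with (2 * ((a - b) / 2)) at 1 by field.
  rewrite cos_2a_sin. replace (2 - 2 * (1 - 2 * sin ((a - b) / 2) * sin ((a - b) / 2))) with ((2 * Rabs (sin ((a - b)/2))) * (2 * Rabs (sin ((a - b) / 2)))).
  apply sqrt_square. pose proof (Rabs_pos (sin ((a - b) / 2))). lra.
  set (t := sin ((a - b) / 2)). assert (E: Rabs t * Rabs t = t * t) by (rewrite <- Rabs_mult; apply Rabs_pos_eq; nra).
  transitivity (4 * (Rabs t * Rabs t)). ring. rewrite E. ring. Qed.

Lemma jordan2 t : 0 < t < PI -> 2 * t / PI < 2 * sin (t / 2).
Proof. intros H. pose proof PI_RGT_0. pose proof (jordan (t / 2) ltac:(lra)).
  replace (2 * (t / 2) / PI) with (t / PI) in H1 by (field; lra).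
  replace (2 * t / PI) with (2 * (t / PI)) by (field; lra). lra. Qed.

Lemma Cnorm_expi_lb a b : 0 < Rabs (a - b) < PI -> 2 * Rabs (a - b) / PI < Cnorm (Csub (Cexpi a) (Cexpi b)).
Proof. intros H. rewrite Cnorm_expi_diff. pose proof PI_RGT_0.
  pose proof (jordan2 _ H).
  assert (E : Rabs (sin ((a - b) / 2)) = sin (Rabs (a - b) / 2)).
  { destruct (Rle_dec 0 (a - b)).
    - rewrite Rabs_pos_eq with (x := a - b) by lra. apply Rabs_pos_eq. apply sin_ge_0; rewrite Rabs_pos_eq in H by lra; lra.
    - rewrite Rabs_left with (r := a - b) by lra. replace ((a - b) / 2) with (- (- (a - b) / 2)) by field.
      rewrite sin_neg, Rabs_Ropp. apply Rabs_pos_eq. apply sin_ge_0; rewrite Rabs_left in H by lra; lra. }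
  rewrite E. lra. Qed.

Lemma Rprodl_app_mid l1 M l2 f : Rprodl (l1 ++ M :: l2) f = f M * Rprodl (l1 ++ l2) f.
Proof. induction l1; simpl. auto. rewrite IHl1. ring. Qed.
Lemma Rprodl_ext l f g : (forall k, In k l -> f k = g k) -> Rprodl l f = Rprodl l g.
Proof. induction l; simpl; intros H; auto. rewrite H, IHl; auto. Qed.
Lemma Rprodl_filter l f (p : nat -> bool) : Rprodl l f = Rprodl (filter p l) f * Rprodl (filter (fun k => negb (p k)) l) f.
Proof. induction l; simpl. ring. destruct (p a); simpl; rewrite IHl; ring. Qed.
Lemma filter_len l (p : nat -> bool) : (length (filter p l) + length (filter (fun k => negb (p k)) l))%nat = length l.
Proof. induction l; simpl. auto. destruct (p a); simpl; lia. Qed.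
Lemma Rprodl_scal l c f : Rprodl l (fun k => c * f k) = c ^ length l * Rprodl l f.
Proof. induction l; simpl. ring. rewrite IHl. ring. Qed.

Lemma exists_max (l : list nat) (y : nat -> R) : l <> nil -> exists M, In M l /\ forall b, In b l -> y b <= y M.
Proof. induction l; intros H. contradiction. destruct l as [|a' l'].
  - exists a. split. left; auto. intros b [Hb|[]]; subst; lra.
  - destruct IHl as [M [HM HM']]. discriminate. destruct (Rle_dec (y a) (y M)).
    + exists M. split. right; auto. intros b [Hb|Hb]. subst; auto. auto.
    + exists a. split. left; auto. intros b [Hb|Hb]. subst; lra. specialize (HM' b Hb). lra. Qed.

Lemma onesided (y : nat -> R) (x D : R) : 0 <= D -> forall n l, length l = n -> NoDup l ->
  (forall k, In k l -> D <= y k - x) ->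
  (forall p k, In p l -> In k l -> p <> k -> D <= Rabs (y p - y k)) ->
  D ^ n * INR (fact n) <= Rprodl l (fun k => y k - x) /\
  (l <> nil -> exists b, In b l /\ INR n * D <= y b - x).
Proof. intros HD n. induction n; intros l Hlen Hnd Hx Hpw.
  - destruct l; simpl in *; try lia. split. simpl. lra. intros H; contradiction.
  - assert (Hne : l <> nil) by (intro; subst; simpl in *; lia).
    destruct (exists_max l y Hne) as [M [HM HMax]].
    destruct (in_split M l HM) as [l1 [l2 El]]. subst l.
    pose proof (NoDup_remove_1 _ _ _ Hnd) as Hnd'. pose proof (NoDup_remove_2 _ _ _ Hnd) as Hnin.
    assert (Hin' : forall k, In k (l1 ++ l2) -> In k (l1 ++ M :: l2)).
    { intros k Hk. apply in_app_or in Hk. apply in_or_app. simpl. tauto. }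
    destruct (IHn (l1 ++ l2)) as [IH1 IH2]; auto.
    { rewrite length_app in *. simpl in Hlen. lia. }
    assert (HMx : INR (S n) * D <= y M - x).
    { destruct n.
      - simpl. specialize (Hx M HM). lra.
      - destruct IH2 as [b [Hb Hbx]]. { intro E. apply app_eq_nil in E. destruct E; subst. simpl in Hlen. lia. }
        assert (M <> b) by (intro; subst; contradiction).
        pose proof (Hpw M b HM (Hin' b Hb) H). pose proof (HMax b (Hin' b Hb)).
        rewrite Rabs_pos_eq in H0 by lra. rewrite S_INR. lra. }
    split.
    + rewrite Rprodl_app_mid. rewrite fact_simpl, mult_INR. simpl pow.
      assert (0 <= INR (S n) * D) by (apply Rmult_le_pos; auto; apply pos_INR).
      assert (0 <= D ^ n * INR (fact n)) by (apply Rmult_le_pos; [apply pow_le; auto | apply pos_INR]).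
      replace (D * D ^ n * (INR (S n) * INR (fact n))) with ((INR (S n) * D) * (D ^ n * INR (fact n))) by ring.
      apply Rmult_le_compat; auto.
    + intros _. exists M. split; auto. Qed.

Lemma fact_min M L : (L <= M)%nat -> (fact (M / 2) * fact (M - M / 2) <= fact L * fact (M - L))%nat.
Proof.
  assert (Hh : (2 * (M / 2) <= M)%nat) by (apply Nat.Div0.mul_div_le).
  assert (Hh2 : (M <= 2 * (M / 2) + 1)%nat) by (pose proof (Nat.div_mod M 2 ltac:(lia)); pose proof (Nat.mod_upper_bound M 2 ltac:(lia)); lia).
  assert (down : forall k L, (L + k = M / 2)%nat -> (fact (M / 2) * fact (M - M / 2) <= fact L * fact (M - L))%nat).
  { induction k; intros L0 HL. rewrite Nat.add_0_r in HL. subst. lia.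
    specialize (IHk (S L0) ltac:(lia)). eapply Nat.le_trans. apply IHk.
    replace (M - L0)%nat with (S (M - S L0)) by lia. rewrite !fact_simpl.
    assert (S L0 <= S (M - S L0))%nat by lia. nia. }
  intros HL. destruct (le_lt_dec L (M / 2)).
  - apply (down (M / 2 - L)%nat). lia.
  - replace (fact L * fact (M - L))%nat with (fact (M - L) * fact (M - (M - L)))%nat.
    apply (down (M / 2 - (M - L))%nat). lia. replace (M - (M - L))%nat with L by lia. lia. Qed.

Lemma div2_eq q r : (r < 2)%nat -> ((2 * q + r) / 2 = q)%nat.
Proof. intros. rewrite Nat.mul_comm, Nat.div_add_l by lia. rewrite Nat.div_small by lia. lia. Qed.

Lemma zeta_eq n : (1 <= n)%nat -> zeta n = INR (fact ((n - 1) / 2)) * INR (fact ((n - 1) - (n - 1) / 2)).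
Proof. intros Hn. unfold zeta. destruct (Nat.Even_or_Odd n) as [[r Hr]|[r Hr]]; subst n.
  - assert (Nat.odd (2 * r) = false). { rewrite <- Nat.negb_even, Nat.even_mul. reflexivity. }
    rewrite H. replace (2 * r - 1)%nat with (2 * (r - 1) + 1)%nat by lia. rewrite div2_eq by lia.
    replace (2 * r / 2)%nat with r by (rewrite <- (Nat.add_0_r (2 * r)), div2_eq; lia).
    replace ((2 * r - 2) / 2)%nat with (r - 1)%nat by (replace (2 * r - 2)%nat with (2 * (r - 1) + 0)%nat by lia; rewrite div2_eq; lia).
    replace (2 * (r - 1) + 1 - (r - 1))%nat with r by lia. ring.
  - assert (Nat.odd (2 * r + 1) = true). { apply Nat.odd_spec. exists r. auto. }
    rewrite H. replace (2 * r + 1 - 1)%nat with (2 * r + 0)%nat by lia. rewrite div2_eq by lia.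
    replace (2 * r + 0 - r)%nat with r by lia. simpl. ring. Qed.

Lemma prod_lb (n : nat) (y : nat -> R) (D : R) (j : nat) : 0 < D -> (j < n)%nat ->
  (forall p k, (p < n)%nat -> (k < n)%nat -> p <> k -> D <= Rabs (y p - y k)) ->
  D ^ (n - 1) * zeta n <= Rprodl (others n j) (fun k => Rabs (y j - y k)).
Proof.
  intros HD Hj Hpw.
  set (p := fun k => if Rlt_dec (y k) (y j) then true else false).
  rewrite (Rprodl_filter _ _ p).
  set (lL := filter p (others n j)). set (lR := filter (fun k => negb (p k)) (others n j)).
  assert (HinL : forall k, In k lL -> (k < n)%nat /\ k <> j /\ y k < y j).
  { intros k Hk. unfold lL, p in Hk. apply filter_In in Hk. destruct Hk as [Hk Hp]. apply in_others in Hk.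
    destruct (Rlt_dec (y k) (y j)); try discriminate. tauto. }
  assert (HinR : forall k, In k lR -> (k < n)%nat /\ k <> j /\ y j < y k).
  { intros k Hk. unfold lR, p in Hk. apply filter_In in Hk. destruct Hk as [Hk Hp]. apply in_others in Hk.
    destruct (Rlt_dec (y k) (y j)); try discriminate. split; [tauto|split;[tauto|]].
    pose proof (Hpw j k Hj (proj1 Hk) (fun E => proj2 Hk (eq_sym E))). destruct (Rle_dec (y k) (y j)).
    assert (y k = y j) by lra. rewrite H0 in H. rewrite Rminus_diag, Rabs_R0 in H. lra. lra. }
  assert (HndO : NoDup (others n j)) by (apply NoDup_filter, seq_NoDup).
  assert (HL : D ^ length lL * INR (fact (length lL)) <= Rprodl lL (fun k => Rabs (y j - y k))).
  { rewrite (Rprodl_ext _ _ (fun k => (fun k => - y k) k - - y j)).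
    apply (onesided (fun k => - y k) (- y j) D ltac:(lra) _ lL eq_refl).
    - apply NoDup_filter; auto.
    - intros k Hk. destruct (HinL k Hk) as [Hk1 [Hk2 Hk3]]. pose proof (Hpw j k Hj Hk1 (fun E => Hk2 (eq_sym E))).
      rewrite Rabs_pos_eq in H by lra. lra.
    - intros a b Ha Hb Hab. destruct (HinL a Ha), (HinL b Hb). replace (- y a - - y b) with (- (y a - y b)) by ring.
      rewrite Rabs_Ropp. apply Hpw; tauto.
    - intros k Hk. destruct (HinL k Hk) as [_ [_ Hk3]]. rewrite Rabs_pos_eq; lra. }
  assert (HR : D ^ length lR * INR (fact (length lR)) <= Rprodl lR (fun k => Rabs (y j - y k))).
  { rewrite (Rprodl_ext _ _ (fun k => y k - y j)).
    apply (onesided y (y j) D ltac:(lra) _ lR eq_refl).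
    - apply NoDup_filter; auto.
    - intros k Hk. destruct (HinR k Hk) as [Hk1 [Hk2 Hk3]]. pose proof (Hpw j k Hj Hk1 (fun E => Hk2 (eq_sym E))).
      rewrite Rabs_left in H by lra. lra.
    - intros a b Ha Hb Hab. destruct (HinR a Ha), (HinR b Hb). apply Hpw; tauto.
    - intros k Hk. destruct (HinR k Hk) as [_ [_ Hk3]]. rewrite Rabs_left; lra. }
  assert (Hlen : (length lL + length lR = n - 1)%nat) by (unfold lL, lR; rewrite filter_len; apply others_length; auto).
  assert (Hz : zeta n <= INR (fact (length lL)) * INR (fact (length lR))).
  { rewrite zeta_eq by lia. rewrite <- !mult_INR. apply le_INR.
    replace (length lR) with ((n - 1) - length lL)%nat by lia. apply fact_min. lia. }
  assert (0 <= D ^ length lL * INR (fact (length lL))) by (apply Rmult_le_pos; [apply pow_le; lra|apply pos_INR]).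
  assert (0 <= D ^ length lR * INR (fact (length lR))) by (apply Rmult_le_pos; [apply pow_le; lra|apply pos_INR]).
  assert (Hm : (D ^ length lL * INR (fact (length lL))) * (D ^ length lR * INR (fact (length lR))) <= Rprodl lL (fun k => Rabs (y j - y k)) * Rprodl lR (fun k => Rabs (y j - y k))) by (apply Rmult_le_compat; auto).
  eapply Rle_trans. 2: exact Hm.
  rewrite <- Hlen, pow_add.
  replace (D ^ length lL * D ^ length lR * zeta n) with ((D ^ length lL * D ^ length lR) * zeta n) by ring.
  replace (D ^ length lL * INR (fact (length lL)) * (D ^ length lR * INR (fact (length lR)))) with ((D ^ length lL * D ^ length lR) * (INR (fact (length lL)) * INR (fact (length lR)))) by ring.
  apply Rmult_le_compat_l; auto. apply Rmult_le_pos; apply pow_le; lra.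
Qed.

Lemma cdot_fst_vn2 N x : fst (cdot N x x) = vn2 N x.
Proof. rewrite vn2_cdot; auto. Qed.

Lemma proj_le N V x : unitary N V -> vn2 N (Mv N (adj V) x) <= vn2 N x.
Proof. intros HV. set (d := Mv N (adj V) x). set (w := Mv N V d).
  assert (E1 : cdot N w w = cdot N d d) by (apply cdot_unitary; auto).
  assert (E2 : cdot N x w = cdot N d d).
  { unfold cdot, w, d, Mv, adj.
    transitivity (Csum N (fun q => Csum N (fun k => Cmul (Cmul (Cconj (x q)) (V q k)) (Csum N (fun q' => Cmul (Cconj (V q' k)) (x q')))))).
    - apply Csum_ext; intros q _. rewrite Csum_mull. apply Csum_ext; intros; ring.
    - rewrite Csum_swap. apply Csum_ext; intros k _. rewrite <- Csum_mulr. f_equal.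
      rewrite Csum_conj. apply Csum_ext; intros q _. rewrite Cconj_mul, Cconj_conj. ring. }
  assert (0 <= vn2 N (fun q => Cadd (x q) (Copp (w q)))) by apply vn2_nonneg.
  unfold vn2 in H. rewrite (Rsum_ext N _ (fun q => Cn2 (x q) + (- 2) * fst (Cmul (Cconj (x q)) (w q)) + Cn2 (w q))) in H.
  2:{ intros k _. rewrite Cn2_add, Cn2_opp. f_equal. f_equal. destruct (x k), (w k). unfold Cmul, Cconj, Copp; simpl. ring. }
  rewrite !Rsum_add, Rsum_scal in H. fold (vn2 N x) (vn2 N w) in H.
  rewrite <- fst_Csum in H. fold (cdot N x w) in H. rewrite E2, cdot_fst_vn2 in H.
  rewrite (vn2_cdot N w), E1, cdot_fst_vn2 in H. fold d. lra. Qed.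

Lemma Rprodl_nonneg_in l f : (forall k, In k l -> 0 <= f k) -> 0 <= Rprodl l f.
Proof. induction l; simpl; intros H. lra. apply Rmult_le_pos; auto. Qed.

Lemma Rprodl_lt l f g : l <> nil -> (forall k, In k l -> 0 <= f k < g k) -> Rprodl l f < Rprodl l g.
Proof. induction l; intros Hne H. contradiction. simpl. destruct l as [|b l'].
  - simpl. specialize (H a (or_introl eq_refl)). lra.
  - assert (Rprodl (b :: l') f < Rprodl (b :: l') g) by (apply IHl; [discriminate| intros; apply H; right; auto]).
    assert (0 <= Rprodl (b :: l') f) by (apply Rprodl_nonneg_in; intros; apply H; right; auto).
    specialize (H a (or_introl eq_refl)). apply Rmult_le_0_lt_compat; lra. Qed.

Lemma prod_bound (n s : nat) (Omega R0 : R) (y : nat -> R) :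
  (2 <= n)%nat -> (n <= s)%nat -> 0 < Omega -> 0 < R0 ->
  (forall j, (j < n)%nat -> - (INR (n - 1) * PI / (2 * Omega)) <= y j <= INR (n - 1) * PI / (2 * Omega)) ->
  (forall p j, (p < n)%nat -> (j < n)%nat -> p <> j -> Rabs (y p - y j) > PI * INR s / Omega * R0) ->
  forall j, (j < n)%nat -> 2 ^ (n - 1) * (zeta n * R0 ^ (n - 1)) <
    Rprodl (others n j) (fun k => Cnorm (Csub (Cexpi (y j * (Omega / INR s))) (Cexpi (y k * (Omega / INR s))))).
Proof.
  intros Hn Hs HO HR hy hsep j Hj.
  set (h := Omega / INR s). set (D := PI * INR s / Omega * R0).
  pose proof PI_RGT_0.
  assert (Hs0 : 0 < INR s) by (apply lt_0_INR; lia).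
  assert (Hh : 0 < h) by (unfold h; apply Rdiv_lt_0_compat; lra).
  assert (HD : 0 < D) by (unfold D; apply Rmult_lt_0_compat; [apply Rdiv_lt_0_compat; [apply Rmult_lt_0_compat|]|]; lra).
  assert (Hns : INR (n - 1) < INR s) by (apply lt_INR; lia).
  set (f := fun k => 2 * h / PI * Rabs (y j - y k)).
  assert (Hlt : Rprodl (others n j) f < Rprodl (others n j) (fun k => Cnorm (Csub (Cexpi (y j * h)) (Cexpi (y k * h))))).
  { apply Rprodl_lt.
    - intro E. pose proof (others_length n j Hj). rewrite E in H0. simpl in H0. lia.
    - intros k Hk. apply in_others in Hk. destruct Hk as [Hk Hkj].
      assert (E : Rabs (y j * h - y k * h) = h * Rabs (y j - y k)).
      { replace (y j * h - y k * h) with (h * (y j - y k)) by ring. rewrite Rabs_mult, Rabs_pos_eq; lra. }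
      assert (Hpos : 0 < Rabs (y j - y k)).
      { pose proof (hsep j k Hj Hk (fun E => Hkj (eq_sym E))). fold D in H0. lra. }
      assert (Hup : Rabs (y j - y k) <= INR (n - 1) * PI / Omega).
      { pose proof (hy j Hj); pose proof (hy k Hk).
        assert (INR (n - 1) * PI / (2 * Omega) * 2 = INR (n - 1) * PI / Omega) by (field; lra).
        apply Rabs_le; lra. }
      assert (Hup' : h * Rabs (y j - y k) < PI).
      { apply Rle_lt_trans with (h * (INR (n - 1) * PI / Omega)). apply Rmult_le_compat_l; lra.
        unfold h. replace (Omega / INR s * (INR (n - 1) * PI / Omega)) with (INR (n - 1) / INR s * PI) by (field; lra).
        assert (INR (n - 1) / INR s < 1) by (apply (Rmult_lt_reg_r (INR s)); auto; field_simplify; lra). nra. }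
      split. unfold f. apply Rmult_le_pos. apply Rlt_le, Rdiv_lt_0_compat; lra. apply Rabs_pos.
      pose proof (Cnorm_expi_lb (y j * h) (y k * h)). rewrite E in H0.
      unfold f. replace (2 * h / PI * Rabs (y j - y k)) with (2 * (h * Rabs (y j - y k)) / PI) by (field; lra).
      apply H0. split. apply Rmult_lt_0_compat; lra. lra. }
  assert (Hf : Rprodl (others n j) f = (2 * h / PI) ^ (n - 1) * Rprodl (others n j) (fun k => Rabs (y j - y k))).
  { unfold f. rewrite Rprodl_scal, others_length; auto. }
  assert (Hpl : D ^ (n - 1) * zeta n <= Rprodl (others n j) (fun k => Rabs (y j - y k))).
  { apply prod_lb; auto. intros p k Hp Hk Hpk. pose proof (hsep p k Hp Hk Hpk). fold D in H0. lra. }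
  assert (Hc : 0 < 2 * h / PI) by (apply Rdiv_lt_0_compat; lra).
  assert (E2 : 2 ^ (n - 1) * (zeta n * R0 ^ (n - 1)) = (2 * h / PI) ^ (n - 1) * (D ^ (n - 1) * zeta n)).
  { transitivity ((2 * h / PI * D) ^ (n - 1) * zeta n).
    replace (2 * h / PI * D) with (2 * R0) by (unfold h, D; field; lra). rewrite Rpow_mult_distr. ring.
    rewrite Rpow_mult_distr. ring. }
  rewrite E2. eapply Rle_lt_trans. 2: exact Hlt. rewrite Hf. apply Rmult_le_compat_l. apply pow_le; lra. exact Hpl.
Qed.

Lemma zeta_pos n : (1 <= n)%nat -> 0 < zeta n.
Proof. intros. rewrite zeta_eq by auto. apply Rmult_lt_0_compat; apply lt_0_INR, lt_O_fact. Qed.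

Lemma vn2_zero N c : (forall k, (k < N)%nat -> c k = C0) -> vn2 N c = 0.
Proof. intros H. unfold vn2. rewrite (Rsum_ext N _ (fun _ => 0)). rewrite Rsum_const. ring.
  intros k Hk. rewrite H by auto. unfold Cn2, C0; simpl. ring. Qed.

Lemma vn2_opp N x : vn2 N (fun k => Copp (x k)) = vn2 N x.
Proof. unfold vn2. apply Rsum_ext; intros. apply Cn2_opp. Qed.

Lemma sqrt_le_mul a X : 0 <= a -> 0 <= X -> forall Y, 0 <= Y -> Y <= a ^ 2 * X -> sqrt Y <= a * sqrt X.
Proof. intros Ha HX Y HY H. rewrite <- (sqrt_pow2 a Ha). rewrite <- sqrt_mult by (try apply pow2_ge_0; auto).
  apply sqrt_le_1_alt. simpl in *. lra. Qed.

Lemma part2 (n s : nat) (Omega sigma mmin : R) (a : nat -> cplx) (y : nat -> R)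
  (W : nat -> cplx)
  (hn : (2 <= n)%nat) (hs : (n <= s)%nat)
  (hOmega : 0 < Omega) (hsigma : 0 < sigma) (hsm : sigma < mmin)
  (hy : forall j, (j < n)%nat ->
          - (INR (n - 1) * PI / (2 * Omega)) <= y j <= INR (n - 1) * PI / (2 * Omega))
  (hmin_le : forall j, (j < n)%nat -> mmin <= Cnorm (a j))
  (hW : forall t, (1 <= t <= 2 * s + 1)%nat -> Cnorm (W t) <= sigma)
  (U V : cmat) (sig : nat -> R) :
    is_svd (s + 1) (hankel (fun t => Cadd (model n a y (zpt Omega s t)) (W t))) U sig V ->
    (forall p j, (p < n)%nat -> (j < n)%nat -> p <> j ->
        Rabs (y p - y j) >
          PI * INR s / Omega *
          Rpower (2 * INR n * INR (s + 1) / (zeta n) ^ 2 * (sigma / mmin))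
                 (1 / INR (2 * n - 2))) ->
     sig (n - 1)%nat > INR (s + 1) * sigma.
Proof.
  intros Hsvd hsep.
  set (N := (s + 1)%nat) in *. set (h := Omega / INR s).
  set (Xp := 2 * INR n * INR N / zeta n ^ 2 * (sigma / mmin)) in *.
  set (R0 := Rpower Xp (1 / INR (2 * n - 2))) in *.
  assert (Hz : 0 < zeta n) by (apply zeta_pos; lia).
  assert (HN : 0 < INR N) by (apply lt_0_INR; unfold N; lia).
  assert (Hnr : 0 < INR n) by (apply lt_0_INR; lia).
  assert (HXp : 0 < Xp).
  { unfold Xp. apply Rmult_lt_0_compat. apply Rdiv_lt_0_compat. nra. apply pow_lt; lra. apply Rdiv_lt_0_compat; lra. }
  assert (HR0 : 0 < R0) by (unfold R0, Rpower; apply exp_pos).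
  set (Q := zeta n * R0 ^ (n - 1)).
  assert (HQ : 0 < Q) by (unfold Q; apply Rmult_lt_0_compat; auto; apply pow_lt; auto).
  assert (HQ2 : Q ^ 2 = 2 * INR n * INR N * sigma / mmin).
  { unfold Q. rewrite Rpow_mult_distr, <- pow_mult.
    replace ((n - 1) * 2)%nat with (2 * n - 2)%nat by lia.
    rewrite <- (Rpower_pow (2 * n - 2) R0 HR0). unfold R0. rewrite Rpower_mult.
    replace (1 / INR (2 * n - 2) * INR (2 * n - 2)) with 1.
    2:{ field. apply not_0_INR. lia. }
    rewrite Rpower_1 by auto. unfold Xp. field. split; lra. }
  assert (Hprod := prod_bound n s Omega R0 y hn hs hOmega HR0 hy hsep).
  assert (Hvan : forall c, (exists j, (j < n)%nat /\ c j <> C0) ->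
     Q ^ 2 * vn2 n c < INR n * vn2 N (fun p => Csum n (fun i => Cmul (ee (y i) h p) (c i)))).
  { intros c Hc. apply vander; auto. unfold N; lia. lia. }
  assert (Hvan' : forall c, Q ^ 2 * vn2 n c <= INR n * vn2 N (fun p => Csum n (fun i => Cmul (ee (y i) h p) (c i)))).
  { intros c. destruct (classic (exists j, (j < n)%nat /\ c j <> C0)) as [Hc|Hc].
    apply Rlt_le, Hvan; auto.
    rewrite vn2_zero. rewrite Rmult_0_r. apply Rmult_le_pos. lra. apply vn2_nonneg.
    intros k Hk. destruct (classic (c k = C0)); auto. exfalso; apply Hc; eauto. }
  pose proof Hsvd as [HU [HV [Hpos [Hdec HA]]]].
  apply Rnot_le_gt. intro Hsig.
  destruct (kernel_range (n - 1) n (fun k i => Csum N (fun q => Cmul (Cconj (V q k)) (Cconj (ee (y i) h q))))) as [b [[i0 [Hi0 Hbi0]] [Hbz Hb]]]. lia.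
  set (x := fun q => Csum n (fun i => Cmul (Cconj (ee (y i) h q)) (b i))).
  set (d := Mv N (adj V) x).
  assert (Hd : forall k, (k < n - 1)%nat -> d k = C0).
  { intros k Hk. rewrite <- (Hb k Hk). unfold d, Mv, adj, x.
    transitivity (Csum N (fun q => Csum n (fun i => Cmul (Cmul (Cconj (V q k)) (Cconj (ee (y i) h q))) (b i)))).
    apply Csum_ext; intros q _. rewrite Csum_mull. apply Csum_ext; intros; ring.
    rewrite Csum_swap. apply Csum_ext; intros i _. rewrite Csum_mulr. auto. }
  assert (Hx1 : Q ^ 2 * vn2 n b < INR n * vn2 N x).
  { replace (vn2 n b) with (vn2 n (fun i => Cconj (b i))) by (unfold vn2; apply Rsum_ext; intros; apply Cn2_conj).
    replace (vn2 N x) with (vn2 N (fun p => Csum n (fun i => Cmul (ee (y i) h p) (Cconj (b i))))).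
    apply Hvan. exists i0. split; auto. intro E. apply Hbi0. rewrite <- (Cconj_conj (b i0)), E. apply Cconj_C0.
    unfold vn2. apply Rsum_ext; intros p _. rewrite <- Cn2_conj. f_equal. unfold x. rewrite Csum_conj.
    apply Csum_ext; intros i _. rewrite Cconj_mul, Cconj_conj. ring. }
  set (w := fun i => Csum N (fun q => Cmul (ee (y i) h q) (x q))).
  assert (HXw : vn2 N x <= sqrt (vn2 n b) * sqrt (vn2 n w)).
  { assert (E : cdot N x x = Csum n (fun i => Cmul (Cconj (b i)) (w i))).
    { unfold cdot. transitivity (Csum N (fun q => Csum n (fun i => Cmul (Cconj (b i)) (Cmul (ee (y i) h q) (x q))))).
      - apply Csum_ext; intros q _. unfold x at 1. rewrite Csum_conj, Csum_mulr. apply Csum_ext; intros i _.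
        rewrite Cconj_mul, Cconj_conj. ring.
      - rewrite Csum_swap. apply Csum_ext; intros i _. unfold w. rewrite Csum_mull. auto. }
    rewrite vn2_cdot, E, fst_Csum.
    eapply Rle_trans. apply Rsum_le. intros i _. apply Re_mul_le.
    pose proof (Rsum_CS_sqrt n (fun i => Cnorm (b i)) (fun i => Cnorm (w i))). cbv beta in H.
    rewrite (Rsum_ext n (fun k => Cnorm (b k) ^2) (fun k => Cn2 (b k))) in H by (intros; rewrite Cn2_Cnorm; auto).
    rewrite (Rsum_ext n (fun k => Cnorm (w k) ^2) (fun k => Cn2 (w k))) in H by (intros; rewrite Cn2_Cnorm; auto).
    unfold vn2. exact H. }
  assert (Hs0 : (s <> 0)%nat) by lia.
  set (h0 := Mv N (fun p q => model n a y (zpt Omega s (p + q + 1))) x).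
  set (a' := fun i => Cmul (a i) (Cexpi (- (y i * Omega)))).
  assert (Hh0 : forall p, h0 p = Csum n (fun i => Cmul (ee (y i) h p) (Cmul (a' i) (w i)))).
  { intros p. unfold h0. rewrite model_factor by auto. apply Csum_ext; intros; unfold a', w, h; ring. }
  assert (HH0 : Q ^ 2 * (mmin ^ 2 * vn2 n w) <= INR n * vn2 N h0).
  { rewrite (vn2_ext N h0 _ (fun p _ => Hh0 p)). eapply Rle_trans. 2: apply Hvan'.
    apply Rmult_le_compat_l. apply pow2_ge_0. unfold vn2. rewrite <- Rsum_scal. apply Rsum_le. intros i Hi.
    unfold a'. rewrite !Cn2_mul, Cn2_Cexpi, (Cn2_Cnorm (a i)). pose proof (hmin_le i Hi).
    assert (mmin ^ 2 <= Cnorm (a i) ^ 2) by (apply pow_incr; lra). rewrite Rmult_1_r. apply Rmult_le_compat_r; auto. apply Cn2_nonneg. }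
  set (Y := fun t => Cadd (model n a y (zpt Omega s t)) (W t)).
  set (Hxv := Mv N (hankel Y) x).
  set (Ex := Mv N (fun p q => W (p + q + 1)%nat) x).
  assert (Hsn : 0 <= sig (n - 1)%nat) by (apply Hpos; unfold N; lia).
  assert (HNs : 0 <= INR N * sigma) by nra.
  assert (HHx : vn2 N Hxv <= (INR N * sigma) ^ 2 * vn2 N x).
  { assert (HS : forall p, (p < N)%nat -> Hxv p = Mv N U (fun k => Cmul (RtoC (sig k)) (d k)) p).
    { intros p Hp. unfold Hxv, d. apply svd_action; auto. }
    rewrite (vn2_ext N _ _ HS), vn2_scal_sig by auto.
    apply Rle_trans with (sig (n - 1)%nat ^ 2 * vn2 N d).
    { unfold vn2. rewrite <- Rsum_scal. apply Rsum_le. intros k Hk. destruct (lt_dec k (n - 1)).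
      - rewrite Hd by auto. unfold Cn2, C0; simpl. lra.
      - apply Rmult_le_compat_r. apply Cn2_nonneg. assert (0 <= sig k) by (apply Hpos; auto).
        assert (sig k <= sig (n - 1)%nat) by (apply (sig_mono N sig Hdec); lia). apply pow_incr; lra. }
    pose proof (proj_le N V x HV). fold d in H. pose proof (vn2_nonneg N d).
    assert (sig (n - 1)%nat ^ 2 <= (INR N * sigma) ^ 2) by (apply pow_incr; lra).
    pose proof (vn2_nonneg N x). pose proof (pow2_ge_0 (sig (n-1)%nat)). nra. }
  assert (HEx : vn2 N Ex <= (INR N * sigma) ^ 2 * vn2 N x).
  { apply noise_bound. lra. intros p q Hp Hq. apply hW. unfold N in *; lia. }
  assert (Hmink : sqrt (vn2 N h0) <= sqrt (vn2 N Hxv) + sqrt (vn2 N Ex)).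
  { rewrite <- (vn2_opp N Ex). rewrite (vn2_ext N h0 (fun k => Cadd (Hxv k) (Copp (Ex k)))). apply vn2_add.
    intros k Hk. unfold Hxv, Ex, Y. rewrite hankel_split. fold h0. ring. }
  pose proof (vn2_nonneg N x) as HX0.
  pose proof (sqrt_le_mul _ _ HNs HX0 _ (vn2_nonneg N Hxv) HHx).
  pose proof (sqrt_le_mul _ _ HNs HX0 _ (vn2_nonneg N Ex) HEx).
  assert (Hh0b : vn2 N h0 <= 4 * (INR N * sigma) ^ 2 * vn2 N x).
  { assert (Q1 : sqrt (vn2 N h0) <= 2 * (INR N * sigma) * sqrt (vn2 N x)) by lra.
    pose proof (sqrt_pos (vn2 N h0)) as Q2.
    assert (Q3 : sqrt (vn2 N h0) ^ 2 <= (2 * (INR N * sigma) * sqrt (vn2 N x)) ^ 2) by (apply pow_incr; lra).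
    rewrite pow2_sqrt in Q3 by apply vn2_nonneg.
    replace ((2 * (INR N * sigma) * sqrt (vn2 N x)) ^ 2) with (4 * (INR N * sigma) ^ 2 * (sqrt (vn2 N x) ^ 2)) in Q3 by ring.
    rewrite pow2_sqrt in Q3 by auto. lra. }
  clearbody h0 w x Q.
  set (X := vn2 N x) in *. set (B := vn2 n b) in *. set (Wn := vn2 n w) in *. set (Hn := vn2 N h0) in *.
  assert (HB : 0 <= B) by apply vn2_nonneg. assert (HW : 0 <= Wn) by apply vn2_nonneg.
  rewrite HQ2 in Hx1, HH0.
  assert (Hm : 0 < mmin) by lra.
  assert (E1 : 2 * INR N * sigma * B < mmin * X).
  { apply (Rmult_lt_reg_l (INR n / mmin)). apply Rdiv_lt_0_compat; lra.
    replace (INR n / mmin * (2 * INR N * sigma * B)) with (2 * INR n * INR N * sigma / mmin * B) by (field; lra).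
    replace (INR n / mmin * (mmin * X)) with (INR n * X) by (field; lra). exact Hx1. }
  assert (E3 : mmin * Wn <= 2 * INR N * sigma * X).
  { apply (Rmult_le_reg_l (2 * INR n * INR N * sigma)). repeat apply Rmult_lt_0_compat; lra.
    replace (2 * INR n * INR N * sigma * (mmin * Wn)) with (2 * INR n * INR N * sigma / mmin * (mmin ^ 2 * Wn)) by (field; lra).
    replace (2 * INR n * INR N * sigma * (2 * INR N * sigma * X)) with (INR n * (4 * (INR N * sigma) ^ 2 * X)) by ring.
    eapply Rle_trans. exact HH0. apply Rmult_le_compat_l; lra. }
  assert (HXp0 : 0 < X) by (assert (0 <= 2 * INR N * sigma * B) by nra; nra).
  assert (E2 : X * X <= B * Wn).
  { pose proof (sqrt_pos B); pose proof (sqrt_pos Wn).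
    assert (H5 : X * X <= (sqrt B * sqrt Wn) * (sqrt B * sqrt Wn)) by (apply Rmult_le_compat; lra).
    replace ((sqrt B * sqrt Wn) * (sqrt B * sqrt Wn)) with ((sqrt B * sqrt B) * (sqrt Wn * sqrt Wn)) in H5 by ring.
    rewrite !sqrt_sqrt in H5 by auto. lra. }
  assert (HWp : 0 < Wn) by (destruct HW as [HW|HW]; auto; rewrite <- HW in E2; nra).
  assert (2 * INR N * sigma * B * Wn < mmin * X * Wn) by (apply Rmult_lt_compat_r; auto).
  assert (mmin * Wn * X <= 2 * INR N * sigma * X * X) by (apply Rmult_le_compat_r; lra).
  assert (2 * INR N * sigma * (X * X) <= 2 * INR N * sigma * (B * Wn)) by (apply Rmult_le_compat_l; nra).
  nra.
Qed.


Theorem theorem5p1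
  (n s : nat) (Omega sigma mmin : R) (a : nat -> cplx) (y : nat -> R)
  (W : nat -> cplx)
  (hn : (2 <= n)%nat) (hs : (n <= s)%nat)
  (hOmega : 0 < Omega) (hsigma : 0 < sigma) (hsm : sigma < mmin)
  (hdist : forall p j, (p < n)%nat -> (j < n)%nat -> p <> j -> y p <> y j)
  (hy : forall j, (j < n)%nat ->
          - (INR (n - 1) * PI / (2 * Omega)) <= y j <= INR (n - 1) * PI / (2 * Omega))
  (hmin_le : forall j, (j < n)%nat -> mmin <= Cnorm (a j))
  (hmin_att : exists j, (j < n)%nat /\ Cnorm (a j) = mmin)
  (hW : forall t, (1 <= t <= 2 * s + 1)%nat -> Cnorm (W t) <= sigma) :
  let Y := fun t => Cadd (model n a y (zpt Omega s t)) (W t) in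
  forall (U V : cmat) (sig : nat -> R),
    is_svd (s + 1) (hankel Y) U sig V ->
    (forall j, (n <= j <= s)%nat -> sig j <= INR (s + 1) * sigma) /\
    ((forall p j, (p < n)%nat -> (j < n)%nat -> p <> j ->
        Rabs (y p - y j) >
          PI * INR s / Omega *
          Rpower (2 * INR n * INR (s + 1) / (zeta n) ^ 2 * (sigma / mmin))
                 (1 / INR (2 * n - 2))) ->
     sig (n - 1)%nat > INR (s + 1) * sigma).
Proof.
  intros Y U V sig Hsvd. split.
  - intros j Hj. exact (part1 n s Omega sigma a y W hs ltac:(lia) (Rlt_le _ _ hsigma) hW U V sig Hsvd j Hj).
  - intros hsep. exact (part2 n s Omega sigma mmin a y W hn hs hOmega hsigma hsm hy hmin_le hW U V sig Hsvd hsep).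
Qed.
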